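(* Consider the barotropic two-phase setting described in the context. Let $(\alpha_1,\rho_1,\rho_2,u_1,u_2)$ be a smooth solution, with $\alpha_1\in(0,1)$ and $\rho_1,\rho_2>0$, of the homogeneous one-dimensional conservative SHTC system \begin{align*} &\partial_t(\alpha_1\rho)+\partial_x(\alpha_1\rho u)=0,\qquad \partial_t(\alpha_1\rho_1)+\partial_x(\alpha_1\rho_1u_1)=0,\qquad \partial_t\rho+\partial_x(\rho u)=0,\\ &\partial_t(\alpha_1\rho_1u_1+\alpha_2\rho_2u_2)+\partial_x(\alpha_1\rho_1u_1^2+\alpha_2\rho_2u_2^2+\alpha_1p_1+\alpha_2p_2)=0,\\ &\partial_t w+\partial_x\Big(\tfrac12u_1^2-\tfrac12u_2^2+\Psi_1(\rho_1)-\Psi_2(\rho_2)\Big)=0 . \end{align*} Then $W=(\alpha_1,\rho_1,\rho_2,u_1,u_2)^T$ satisfies $\partial_tW+A(W)\partial_xW=0$ with \[ A(W)=\begin{pmatrix} u & 0 & 0 & 0 & 0\\ \frac{\rho_1}{\alpha_1}(u_1-u) & u_1 & 0 & \rho_1 & 0\\ \frac{\rho_2}{\alpha_2}(u-u_2) & 0 & u_2 & 0 & \rho_2\\ \frac{p_1-p_2}{\rho} & \frac{a_1^2}{\rho_1} & 0 & u_1 & 0\\ \frac{p_1-p_2}{\rho} & 0 & \frac{a_2^2}{\rho_2} & 0 & u_2 \end{pmatrix}. \] Moreover, for every state $W$ with $\alpha_1\in(0,1)$, $\rho_1,\rho_2>0$: (i) $A R_{1\pm}=(u_1\pm a_1)R_{1\pm}$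 and $A R_{2\pm}=(u_2\pm a_2)R_{2\pm}$, where $R_{1\pm}=(0,1,0,\pm a_1/\rho_1,0)^T$ and $R_{2\pm}=(0,0,1,0,\pm a_2/\rho_2)^T$; (ii) $A R_C=u\,R_C$, where $R_C=\big(\varepsilon_1\varepsilon_2,\ \delta_1\varepsilon_2,\ \delta_2\varepsilon_1,\ (u-u_1)\varepsilon_2\gamma_1,\ -(u-u_2)\varepsilon_1\gamma_2\big)^T$ with $\delta_1=\frac{p_1-p_2}{\rho}-\frac{(u-u_1)^2}{\alpha_1}$, $\delta_2=\frac{p_1-p_2}{\rho}+\frac{(u-u_2)^2}{\alpha_2}$, $\varepsilon_i=\frac{(u-u_i)^2-a_i^2}{\rho_i}$, $\gamma_1=\frac{\alpha_1(p_1-p_2)-\rho a_1^2}{\alpha_1\rho_1\rho}$, $\gamma_2=-\frac{\alpha_2(p_1-p_2)+\rho a_2^2}{\alpha_2\rho_2\rho}$; (iii) viewing $\lambda_{i\pm}=u_i\pm a_i(\rho_i)$ and $\lambda_C=u=(\alpha_1\rho_1u_1+\alpha_2\rho_2u_2)/(\alpha_1\rho_1+\alpha_2\rho_2)$ as functions of $W$, one has $\nabla_W\lambda_{i\pm}\cdot R_{i\pm}=\pm\frac{1}{\rho_i}\frac{d(\rho_ia_i(\rho_i))}{d\rho_i}$ for $i=1,2$, and $\nabla_W\lambda_C\cdot R_C=0$ identically (the field associated with $\lambda_C$ is linearly degenerate).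
   Context: For $i=1,2$ let $p_i:(0,\infty)\to\mathbb{R}$ be smooth with $p_i'>0$, and let $a_i(\rho_i)=\sqrt{p_i'(\rho_i)}$ be the phase sound speed. Let $\varphi_i$ be an antiderivative of $\rho\mapsto p_i(\rho)/\rho^2$ and $\Psi_i(\rho)=\varphi_i(\rho)+p_i(\rho)/\rho$, so $\Psi_i'=a_i^2/\rho$ (in the isentropic case $\varphi_i$ is the specific internal energy and $\Psi_i$ the specific enthalpy; in the isothermal case $\varphi_i$ is the specific free energy and $\Psi_i$ the specific Gibbs energy). Primitive variables: volume fraction $\alpha_1\in(0,1)$, phase densities $\rho_1,\rho_2>0$, phase velocities $u_1,u_2$. Derived quantities: $\alpha_2=1-\alpha_1$, $\rho=\alpha_1\rho_1+\alpha_2\rho_2$, $c_i=\alpha_i\rho_i/\rho$, $u=c_1u_1+c_2u_2$, $w=u_1-u_2$, $p_i=p_i(\rho_i)$, $a_i=a_i(\rho_i)$. *)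

(* Defs.v *)
From Stdlib Require Import Reals Lra.
From Coquelicot Require Import Coquelicot.
Open Scope R_scope.

(** Vectors of R^5 and 5x5 matrices, indexed by 0..4 (other indices unused). *)
Definition vec := nat -> R.
Definition mat := nat -> nat -> R.

Definition v5 (a b c d e : R) : vec :=
  fun i => match i with
           | 0%nat => a | 1%nat => b | 2%nat => c | 3%nat => d | 4%nat => e
           | _ => 0 end.

Definition mulmv (A : mat) (v : vec) : vec :=
  fun i => A i 0%nat * v 0%nat + A i 1%nat * v 1%nat + A i 2%nat * v 2%nat
           + A i 3%nat * v 3%nat + A i 4%nat * v 4%nat.

Definition smooth_pos (p : R -> R) : Prop :=
  forall (n : nat) (r : R), 0 < r -> ex_derive_n p n r.

Definition sspeed (p : R -> R) (r : R) : R := sqrt (Derive p r).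

Definition Psi (p phi : R -> R) (r : R) : R := phi r + p r / r.

Definition alpha1 (W : vec) : R := W 0%nat.
Definition alpha2 (W : vec) : R := 1 - W 0%nat.
Definition rho1 (W : vec) : R := W 1%nat.
Definition rho2 (W : vec) : R := W 2%nat.
Definition u1 (W : vec) : R := W 3%nat.
Definition u2 (W : vec) : R := W 4%nat.
Definition rho (W : vec) : R := alpha1 W * rho1 W + alpha2 W * rho2 W.
Definition umix (W : vec) : R :=
  (alpha1 W * rho1 W * u1 W + alpha2 W * rho2 W * u2 W) / rho W.
Definition wrel (W : vec) : R := u1 W - u2 W.

Definition admissible (W : vec) : Prop :=
  0 < alpha1 W < 1 /\ 0 < rho1 W /\ 0 < rho2 W.

Definition cons_q (W : vec) : vec :=
  v5 (alpha1 W * rho W)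
     (alpha1 W * rho1 W)
     (rho W)
     (alpha1 W * rho1 W * u1 W + alpha2 W * rho2 W * u2 W)
     (wrel W).

Definition flux (p1 p2 phi1 phi2 : R -> R) (W : vec) : vec :=
  v5 (alpha1 W * rho W * umix W)
     (alpha1 W * rho1 W * u1 W)
     (rho W * umix W)
     (alpha1 W * rho1 W * u1 W ^ 2 + alpha2 W * rho2 W * u2 W ^ 2
      + alpha1 W * p1 (rho1 W) + alpha2 W * p2 (rho2 W))
     (/2 * u1 W ^ 2 - /2 * u2 W ^ 2
      + Psi p1 phi1 (rho1 W) - Psi p2 phi2 (rho2 W)).

Definition Amat (p1 p2 : R -> R) (W : vec) : mat :=
  let u := umix W in
  let dp := (p1 (rho1 W) - p2 (rho2 W)) / rho W in
  let a1 := sspeed p1 (rho1 W) in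
  let a2 := sspeed p2 (rho2 W) in
  fun i j =>
    match i, j with
    | 0%nat, 0%nat => u
    | 1%nat, 0%nat => rho1 W / alpha1 W * (u1 W - u)
    | 1%nat, 1%nat => u1 W
    | 1%nat, 3%nat => rho1 W
    | 2%nat, 0%nat => rho2 W / alpha2 W * (u - u2 W)
    | 2%nat, 2%nat => u2 W
    | 2%nat, 4%nat => rho2 W
    | 3%nat, 0%nat => dp
    | 3%nat, 1%nat => a1 ^ 2 / rho1 W
    | 3%nat, 3%nat => u1 W
    | 4%nat, 0%nat => dp
    | 4%nat, 2%nat => a2 ^ 2 / rho2 W
    | 4%nat, 4%nat => u2 W
    | _, _ => 0
    end.

(** Right eigenvectors; s is the sign (+1 or -1) *)
Definition Rac1 (p1 : R -> R) (s : R) (W : vec) : vec :=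
  v5 0 1 0 (s * sspeed p1 (rho1 W) / rho1 W) 0.
Definition Rac2 (p2 : R -> R) (s : R) (W : vec) : vec :=
  v5 0 0 1 0 (s * sspeed p2 (rho2 W) / rho2 W).

Definition delta1 (p1 p2 : R -> R) (W : vec) : R :=
  (p1 (rho1 W) - p2 (rho2 W)) / rho W - (umix W - u1 W) ^ 2 / alpha1 W.
Definition delta2 (p1 p2 : R -> R) (W : vec) : R :=
  (p1 (rho1 W) - p2 (rho2 W)) / rho W + (umix W - u2 W) ^ 2 / alpha2 W.
Definition eps1 (p1 : R -> R) (W : vec) : R :=
  ((umix W - u1 W) ^ 2 - sspeed p1 (rho1 W) ^ 2) / rho1 W.
Definition eps2 (p2 : R -> R) (W : vec) : R :=
  ((umix W - u2 W) ^ 2 - sspeed p2 (rho2 W) ^ 2) / rho2 W.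
Definition gamma1 (p1 p2 : R -> R) (W : vec) : R :=
  (alpha1 W * (p1 (rho1 W) - p2 (rho2 W)) - rho W * sspeed p1 (rho1 W) ^ 2)
  / (alpha1 W * rho1 W * rho W).
Definition gamma2 (p1 p2 : R -> R) (W : vec) : R :=
  - ((alpha2 W * (p1 (rho1 W) - p2 (rho2 W)) + rho W * sspeed p2 (rho2 W) ^ 2)
     / (alpha2 W * rho2 W * rho W)).

Definition RC (p1 p2 : R -> R) (W : vec) : vec :=
  v5 (eps1 p1 W * eps2 p2 W)
     (delta1 p1 p2 W * eps2 p2 W)
     (delta2 p1 p2 W * eps1 p1 W)
     ((umix W - u1 W) * eps2 p2 W * gamma1 p1 p2 W)
     (- ((umix W - u2 W) * eps1 p1 W * gamma2 p1 p2 W)).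

Definition lam1 (p1 : R -> R) (s : R) (W : vec) : R := u1 W + s * sspeed p1 (rho1 W).
Definition lam2 (p2 : R -> R) (s : R) (W : vec) : R := u2 W + s * sspeed p2 (rho2 W).
Definition lamC (W : vec) : R := umix W.

Definition upd (W : vec) (j : nat) (s : R) : vec :=
  fun k => if Nat.eqb k j then s else W k.
Definition partial (f : vec -> R) (j : nat) (W : vec) : R :=
  Derive (fun s => f (upd W j s)) (W j).
Definition gradDot (f : vec -> R) (W : vec) (v : vec) : R :=
  partial f 0%nat W * v 0%nat + partial f 1%nat W * v 1%nat
  + partial f 2%nat W * v 2%nat + partial f 3%nat W * v 3%nat
  + partial f 4%nat W * v 4%nat.

Definition Wfield (al r1 r2 v1 v2 : R -> R -> R) (t x : R) : vec :=
  v5 (al t x) (r1 t x) (r2 t x) (v1 t x) (v2 t x).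

Definition dtW (F : R -> R -> vec) (t x : R) : vec :=
  fun i => Derive (fun s => F s x i) t.
Definition dxW (F : R -> R -> vec) (t x : R) : vec :=
  fun i => Derive (fun y => F t y i) x.

(* Main.v *)
Require Import Defs.
From Stdlib Require Import Reals Lra Lia.
From Coquelicot Require Import Coquelicot.
Open Scope R_scope.

Ltac etared := repeat match goal with |- context [Derive (fun x : R => ?f x)] => change (fun x : R => f x) with f end.
Definition rhoE (a r1 r2 : R) := a*r1+(1-a)*r2.
Definition numE (a r1 r2 v1 v2 : R) := a*r1*v1+(1-a)*r2*v2.
Definition drhoE (a r1 r2 da dr1 dr2 : R) := da*(r1-r2) + a*dr1 + (1-a)*dr2.
Definition dnumE (a r1 r2 v1 v2 da dr1 dr2 dv1 dv2 : R) :=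
  da*r1*v1 + a*dr1*v1 + a*r1*dv1 - da*r2*v2 + (1-a)*dr2*v2 + (1-a)*r2*dv2.

Definition Ycons (k : nat) (a r1 r2 v1 v2 da dr1 dr2 dv1 dv2 : R) : R :=
  match k with
  | 0%nat => da * rhoE a r1 r2 + a * drhoE a r1 r2 da dr1 dr2
  | 1%nat => da*r1 + a*dr1
  | 2%nat => drhoE a r1 r2 da dr1 dr2
  | 3%nat => dnumE a r1 r2 v1 v2 da dr1 dr2 dv1 dv2
  | _ => dv1 - dv2
  end.

Definition Yflux (k : nat) (P1 P2 c1 c2 a r1 r2 v1 v2 da dr1 dr2 dv1 dv2 : R) : R :=
  match k with
  | 0%nat => da * numE a r1 r2 v1 v2 + a * dnumE a r1 r2 v1 v2 da dr1 dr2 dv1 dv2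
  | 1%nat => da*r1*v1 + a*dr1*v1 + a*r1*dv1
  | 2%nat => dnumE a r1 r2 v1 v2 da dr1 dr2 dv1 dv2
  | 3%nat => da*r1*v1^2 + a*dr1*v1^2 + 2*a*r1*v1*dv1 - da*r2*v2^2 + (1-a)*dr2*v2^2
       + 2*(1-a)*r2*v2*dv2 + da*P1 + a*c1*dr1 - da*P2 + (1-a)*c2*dr2
  | _ => v1*dv1 - v2*dv2 + c1/r1*dr1 - c2/r2*dr2
  end.


Lemma der_cons (A B C D E : R -> R) t k :
  ex_derive A t -> ex_derive B t -> ex_derive C t -> ex_derive D t -> ex_derive E t ->
  (k < 5)%nat ->
  Derive (fun s => cons_q (v5 (A s) (B s) (C s) (D s) (E s)) k) t =
  Ycons k (A t) (B t) (C t) (D t) (E t) (Derive A t) (Derive B t) (Derive C t)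
     (Derive D t) (Derive E t).
Proof.
  intros HA HB HC HD HE Hk.
  destruct k as [|[|[|[|[|k]]]]]; try lia;
  cbv [cons_q v5 alpha1 alpha2 rho rho1 rho2 u1 u2 umix wrel Ycons rhoE drhoE dnumE];
  apply is_derive_unique; auto_derive; repeat split; auto; etared; ring.
Qed.

Lemma der_flux (p1 p2 phi1 phi2 A B C D E : R -> R) t k :
  (forall r, 0 < r -> ex_derive p1 r) -> (forall r, 0 < r -> ex_derive p2 r) ->
  (forall r, 0 < r -> is_derive phi1 r (p1 r / r ^ 2)) ->
  (forall r, 0 < r -> is_derive phi2 r (p2 r / r ^ 2)) ->
  0 < A t < 1 -> 0 < B t -> 0 < C t ->
  ex_derive A t -> ex_derive B t -> ex_derive C t -> ex_derive D t -> ex_derive E t ->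
  (k < 5)%nat ->
  Derive (fun s => flux p1 p2 phi1 phi2 (v5 (A s) (B s) (C s) (D s) (E s)) k) t =
  Yflux k (p1 (B t)) (p2 (C t)) (Derive p1 (B t)) (Derive p2 (C t))
     (A t) (B t) (C t) (D t) (E t) (Derive A t) (Derive B t) (Derive C t)
     (Derive D t) (Derive E t).
Proof.
  intros Hp1 Hp2 Hf1 Hf2 HAt HBt HCt HA HB HC HD HE Hk.
  assert (Hr : A t * B t + (1 - A t) * C t <> 0) by nra.
  destruct k as [|[|[|[|[|k]]]]]; try lia;
  cbv [flux v5 alpha1 alpha2 rho rho1 rho2 u1 u2 umix wrel Yflux Psi rhoE numE drhoE dnumE];
  apply is_derive_unique; auto_derive; repeat split; auto.
  all: etared.
  all: try (eexists; apply Hf1; lra).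
  all: try (eexists; apply Hf2; lra).
  all: try lra.
  all: try rewrite (is_derive_unique _ _ _ (Hf1 _ HBt)), (is_derive_unique _ _ _ (Hf2 _ HCt)).
  all: field; lra.
Qed.

Lemma alg (P1 P2 c1 c2 a r1 r2 v1 v2 ta tr1 tr2 tv1 tv2 xa xr1 xr2 xv1 xv2 : R) :
  0 < a < 1 -> 0 < r1 -> 0 < r2 ->
  (forall k, (k < 5)%nat ->
     Ycons k a r1 r2 v1 v2 ta tr1 tr2 tv1 tv2
     + Yflux k P1 P2 c1 c2 a r1 r2 v1 v2 xa xr1 xr2 xv1 xv2 = 0) ->
  let rh := a*r1+(1-a)*r2 in
  let u := (a*r1*v1+(1-a)*r2*v2)/rh in
  let dp := (P1-P2)/rh in
  ta + u*xa = 0 /\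
  tr1 + r1/a*(v1-u)*xa + v1*xr1 + r1*xv1 = 0 /\
  tr2 + r2/(1-a)*(u-v2)*xa + v2*xr2 + r2*xv2 = 0 /\
  tv1 + dp*xa + c1/r1*xr1 + v1*xv1 = 0 /\
  tv2 + dp*xa + c2/r2*xr2 + v2*xv2 = 0.
Proof.
  intros Ha Hr1 Hr2 H rh u dp.
  assert (Hrh : rh <> 0) by (unfold rh; nra).
  assert (Ha0 : a <> 0) by lra. assert (Ha1 : 1 - a <> 0) by lra.
  assert (Hr10 : r1 <> 0) by lra. assert (Hr20 : r2 <> 0) by lra.
  pose proof (H 0%nat ltac:(lia)) as Z0. pose proof (H 1%nat ltac:(lia)) as Z1.
  pose proof (H 2%nat ltac:(lia)) as Z2. pose proof (H 3%nat ltac:(lia)) as Z3.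
  pose proof (H 4%nat ltac:(lia)) as Z4.
  set (Y0 := Ycons 0 _ _ _ _ _ _ _ _ _ _ + _) in Z0.
  set (Y1 := Ycons 1 _ _ _ _ _ _ _ _ _ _ + _) in Z1.
  set (Y2 := Ycons 2 _ _ _ _ _ _ _ _ _ _ + _) in Z2.
  set (Y3 := Ycons 3 _ _ _ _ _ _ _ _ _ _ + _) in Z3.
  set (Y4 := Ycons 4 _ _ _ _ _ _ _ _ _ _ + _) in Z4.
  assert (E0 : ta + u*xa = (Y0 - a*Y2)/rh).
  { unfold Y0, Y2, u, rh; cbv [Ycons Yflux rhoE numE drhoE dnumE]; field; auto. }
  assert (X0 : ta + u*xa = 0) by (rewrite E0, Z0, Z2; field; auto).
  assert (E1 : tr1 + r1/a*(v1-u)*xa + v1*xr1 + r1*xv1 = Y1/a - r1/a*(ta + u*xa)).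
  { unfold Y1, u, rh; cbv [Ycons Yflux rhoE numE drhoE dnumE]; field; auto. }
  assert (E2 : tr2 + r2/(1-a)*(u-v2)*xa + v2*xr2 + r2*xv2 = (Y2 - Y1 + r2*(ta + u*xa))/(1-a)).
  { unfold Y1, Y2, u, rh; cbv [Ycons Yflux rhoE numE drhoE dnumE]; field; auto. }
  assert (E3 : tv1 + dp*xa + c1/r1*xr1 + v1*xv1 = (Y3 - v1*Y1 - v2*(Y2-Y1) + (1-a)*r2*Y4)/rh).
  { unfold Y1, Y2, Y3, Y4, dp, rh; cbv [Ycons Yflux rhoE numE drhoE dnumE]; field; auto. }
  assert (E4 : tv2 + dp*xa + c2/r2*xr2 + v2*xv2 = (tv1 + dp*xa + c1/r1*xr1 + v1*xv1) - Y4).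
  { unfold Y4; cbv [Ycons Yflux]; field; auto. }
  rewrite E4, E3, E2, E1, X0, Z1, Z2, Z3, Z4. repeat split; field; auto.
Qed.

Lemma contactEV : forall p1 p2 W, admissible W -> forall i, (i < 5)%nat ->
        mulmv (Amat p1 p2 W) (RC p1 p2 W) i = lamC W * RC p1 p2 W i.
intros p1 p2 W [[Ha0 Ha1] [H1 H2]] i Hi.
assert (Hrh : rho W <> 0) by (unfold rho, alpha1, alpha2, rho1, rho2 in *; nra).
unfold alpha1, rho1, rho2 in *.
destruct i as [|[|[|[|[|i]]]]]; try lia;
cbv [mulmv Amat RC v5 lamC Defs.delta1 Defs.delta2 Defs.eps1 Defs.eps2 Defs.gamma1 Defs.gamma2 alpha1 alpha2 rho1 rho2 u1 u2];
revert Hrh; generalize (umix W) (rho W) (sspeed p1 (W 1%nat)) (sspeed p2 (W 2%nat)); intros;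
field; repeat split; lra.
Qed.

Lemma gnl1 (p : R -> R) (sg : R) (W : vec) (j : nat) :
  smooth_pos p -> (forall r, 0 < r -> 0 < Derive p r) -> 0 < W j ->
  (j = 1 \/ j = 2)%nat -> sg * sg = 1 ->
  partial (fun V => V (j+2)%nat + sg * sspeed p (V j)) j W * 1
  + partial (fun V => V (j+2)%nat + sg * sspeed p (V j)) (j+2) W * (sg * sspeed p (W j) / W j)
  = sg * (/ W j * Derive (fun r => r * sspeed p r) (W j)).
Proof.
  intros Hs Hpos Hw Hj Hsg.
  assert (E1 : ex_derive p (W j)) by exact (Hs 1%nat _ Hw).
  assert (E2 : ex_derive (Derive p) (W j)) by exact (Hs 2%nat _ Hw).
  assert (P := Hpos _ Hw).
  unfold partial, upd, sspeed.
  rewrite Nat.eqb_refl.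
  assert (N1 : Nat.eqb (j+2) j = false) by (apply Nat.eqb_neq; lia).
  assert (N2 : Nat.eqb j (j+2) = false) by (apply Nat.eqb_neq; lia).
  rewrite N1, Nat.eqb_refl, N2.
  all: rewrite (is_derive_unique (fun r => r * sqrt (Derive p r)) _
        (sqrt (Derive p (W j)) + W j * (Derive (Derive p) (W j) / (2 * sqrt (Derive p (W j)))))).
  all: try (auto_derive; [repeat split; auto | etared; field; apply Rgt_not_eq, sqrt_lt_R0; auto]).
  all: rewrite (is_derive_unique (fun s => W (j+2)%nat + sg * sqrt (Derive p s)) _ (sg * (Derive (Derive p) (W j) / (2 * sqrt (Derive p (W j)))))).
  all: try (auto_derive; [repeat split; auto | etared; field; apply Rgt_not_eq, sqrt_lt_R0; auto]).
  all: rewrite (is_derive_unique (fun s => s + sg * sqrt (Derive p (W j))) _ 1); [|auto_derive; auto; ring].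
  all: field; split; [apply Rgt_not_eq, sqrt_lt_R0; auto | lra].
Qed.

Lemma lindeg (p1 p2 : R -> R) (W : vec) : admissible W -> gradDot lamC W (RC p1 p2 W) = 0.
Proof.
  intros [[Ha0 Ha1] [H1 H2]].
  unfold alpha1, rho1, rho2 in *.
  assert (Hrh : W 0%nat * W 1%nat + (1 - W 0%nat) * W 2%nat <> 0) by nra.
  unfold gradDot, partial, lamC.
  cbv [umix upd alpha1 alpha2 rho rho1 rho2 u1 u2 Nat.eqb].
  set (a := W 0%nat); set (r1 := W 1%nat); set (r2 := W 2%nat); set (v1 := W 3%nat); set (v2 := W 4%nat).
  set (rh := a*r1 + (1-a)*r2).
  set (u := (a*r1*v1 + (1-a)*r2*v2)/rh).
  assert (D0 : Derive (fun s : R => (s*r1*v1 + (1-s)*r2*v2)/(s*r1+(1-s)*r2)) a = (r1*(v1-u) - r2*(v2-u))/rh).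
  { apply is_derive_unique; auto_derive. auto. unfold u, rh. field. auto. }
  assert (D1 : Derive (fun s : R => (a*s*v1 + (1-a)*r2*v2)/(a*s+(1-a)*r2)) r1 = a*(v1-u)/rh).
  { apply is_derive_unique; auto_derive. auto. unfold u, rh. field. auto. }
  assert (D2 : Derive (fun s : R => (a*r1*v1 + (1-a)*s*v2)/(a*r1+(1-a)*s)) r2 = (1-a)*(v2-u)/rh).
  { apply is_derive_unique; auto_derive. auto. unfold u, rh. field. auto. }
  assert (D3 : Derive (fun s : R => (a*r1*s + (1-a)*r2*v2)/rh) v1 = a*r1/rh).
  { apply is_derive_unique; auto_derive. auto. field. auto. }
  assert (D4 : Derive (fun s : R => (a*r1*v1 + (1-a)*r2*s)/rh) v2 = (1-a)*r2/rh).
  { apply is_derive_unique; auto_derive. auto. field. auto. }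
  rewrite D0, D1, D2, D3, D4.
  cbv [RC v5 Defs.delta1 Defs.delta2 Defs.eps1 Defs.eps2 Defs.gamma1 Defs.gamma2 alpha1 alpha2 rho1 rho2 u1 u2].
  change (umix W) with u. change (rho W) with rh. fold a r1 r2 v1 v2.
  generalize (sspeed p1 r1) (sspeed p2 r2) (p1 r1) (p2 r2); intros.
  unfold u. field. unfold rh, a, r1, r2. repeat split; try assumption; lra.
Qed.

Theorem mainTheorem1 (p1 p2 phi1 phi2 : R -> R)
  (Hp1 : smooth_pos p1) (Hp2 : smooth_pos p2)
  (Hp1' : forall r, 0 < r -> 0 < Derive p1 r)
  (Hp2' : forall r, 0 < r -> 0 < Derive p2 r)
  (Hphi1 : forall r, 0 < r -> is_derive phi1 r (p1 r / r ^ 2))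
  (Hphi2 : forall r, 0 < r -> is_derive phi2 r (p2 r / r ^ 2)) :
  (* quasilinear form of smooth solutions of the conservative system *)
  (forall al r1 r2 v1 v2 : R -> R -> R,
     let F := Wfield al r1 r2 v1 v2 in
     (forall t x, admissible (F t x)) ->
     (forall t x (i : nat), (i < 5)%nat ->
        ex_derive (fun s => F s x i) t /\ ex_derive (fun y => F t y i) x) ->
     (forall t x (k : nat), (k < 5)%nat ->
        Derive (fun s => cons_q (F s x) k) t
        + Derive (fun y => flux p1 p2 phi1 phi2 (F t y) k) x = 0) ->
     forall t x (i : nat), (i < 5)%nat ->
       dtW F t x i + mulmv (Amat p1 p2 (F t x)) (dxW F t x) i = 0)
  /\
  (forall W : vec, admissible W ->
     (* (i) acoustic eigenpairs *)
     (forall s : R, (s = 1 \/ s = -1) ->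
        (forall i, (i < 5)%nat ->
           mulmv (Amat p1 p2 W) (Rac1 p1 s W) i = lam1 p1 s W * Rac1 p1 s W i) /\
        (forall i, (i < 5)%nat ->
           mulmv (Amat p1 p2 W) (Rac2 p2 s W) i = lam2 p2 s W * Rac2 p2 s W i))
     /\
     (* (ii) contact eigenpair *)
     (forall i, (i < 5)%nat ->
        mulmv (Amat p1 p2 W) (RC p1 p2 W) i = lamC W * RC p1 p2 W i)
     /\
     (* (iii) genuine nonlinearity coefficients and linear degeneracy *)
     (forall s : R, (s = 1 \/ s = -1) ->
        gradDot (lam1 p1 s) W (Rac1 p1 s W)
          = s * (/ rho1 W * Derive (fun r => r * sspeed p1 r) (rho1 W)) /\
        gradDot (lam2 p2 s) W (Rac2 p2 s W)
          = s * (/ rho2 W * Derive (fun r => r * sspeed p2 r) (rho2 W)))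
     /\
     gradDot lamC W (RC p1 p2 W) = 0).
Proof.
  split.
  - intros al r1 r2 v1 v2. cbv zeta. intros Hadm Hd Hc t x i Hi.
    pose proof (Hadm t x) as [[Ha0 Ha1] [Hr1 Hr2]].
    cbv [Wfield v5 alpha1 rho1 rho2] in Ha0, Ha1, Hr1, Hr2.
    assert (Ep1 : forall r, 0 < r -> ex_derive p1 r) by (intros r Hr; exact (Hp1 1%nat r Hr)).
    assert (Ep2 : forall r, 0 < r -> ex_derive p2 r) by (intros r Hr; exact (Hp2 1%nat r Hr)).
    destruct (Hd t x 0%nat ltac:(lia)) as [T0 X0].
    destruct (Hd t x 1%nat ltac:(lia)) as [T1 X1].
    destruct (Hd t x 2%nat ltac:(lia)) as [T2 X2].
    destruct (Hd t x 3%nat ltac:(lia)) as [T3 X3].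
    destruct (Hd t x 4%nat ltac:(lia)) as [T4 X4].
    cbv [Wfield v5] in T0, X0, T1, X1, T2, X2, T3, X3, T4, X4.
    assert (Hk : forall k, (k < 5)%nat ->
      Ycons k (al t x) (r1 t x) (r2 t x) (v1 t x) (v2 t x)
        (Derive (fun s => al s x) t) (Derive (fun s => r1 s x) t) (Derive (fun s => r2 s x) t)
        (Derive (fun s => v1 s x) t) (Derive (fun s => v2 s x) t)
      + Yflux k (p1 (r1 t x)) (p2 (r2 t x)) (Derive p1 (r1 t x)) (Derive p2 (r2 t x))
        (al t x) (r1 t x) (r2 t x) (v1 t x) (v2 t x)
        (Derive (fun y => al t y) x) (Derive (fun y => r1 t y) x) (Derive (fun y => r2 t y) x)
        (Derive (fun y => v1 t y) x) (Derive (fun y => v2 t y) x) = 0).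
    { intros k Hk. pose proof (Hc t x k Hk) as HH. unfold Wfield in HH.
      pose proof (der_cons (fun s => al s x) (fun s => r1 s x) (fun s => r2 s x)
        (fun s => v1 s x) (fun s => v2 s x) t k T0 T1 T2 T3 T4 Hk) as EC.
      pose proof (der_flux p1 p2 phi1 phi2 (fun y => al t y) (fun y => r1 t y) (fun y => r2 t y)
        (fun y => v1 t y) (fun y => v2 t y) x k Ep1 Ep2 Hphi1 Hphi2
        (conj Ha0 Ha1) Hr1 Hr2 X0 X1 X2 X3 X4 Hk) as EF.
      cbv beta in EC, EF. rewrite EC, EF in HH. exact HH. }
    pose proof (alg _ _ _ _ _ _ _ _ _ _ _ _ _ _ _ _ _ _ _ (conj Ha0 Ha1) Hr1 Hr2 Hk)
      as [Z0 [Z1 [Z2 [Z3 Z4]]]].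
    assert (Hrh : al t x * r1 t x + (1 - al t x) * r2 t x <> 0) by nra.
    assert (S1 : sqrt (Derive p1 (r1 t x)) ^ 2 = Derive p1 (r1 t x))
      by (apply pow2_sqrt; left; apply Hp1'; auto).
    assert (S2 : sqrt (Derive p2 (r2 t x)) ^ 2 = Derive p2 (r2 t x))
      by (apply pow2_sqrt; left; apply Hp2'; auto).
    destruct i as [|[|[|[|[|i]]]]]; try lia;
    cbv [dtW dxW mulmv Amat Wfield v5 umix rho alpha1 alpha2 rho1 rho2 u1 u2 sspeed];
    try rewrite S1; try rewrite S2.
    + etransitivity; [| exact Z0]; field; auto.
    + etransitivity; [| exact Z1]; field; repeat split; auto; lra.
    + etransitivity; [| exact Z2]; field; repeat split; auto; lra.
    + etransitivity; [| exact Z3]; field; repeat split; auto; lra.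
    + etransitivity; [| exact Z4]; field; repeat split; auto; lra.
  - intros W HW. pose proof HW as [[Ha0 Ha1] [Hr1 Hr2]].
    split; [|split; [|split]].
    + intros s Hs.
      assert (Hrho : rho W <> 0) by (unfold rho, alpha1, alpha2, rho1, rho2 in *; nra).
      split; intros i Hi.
      * unfold alpha1, rho1 in *.
        assert (Ha : sqrt (Derive p1 (W 1%nat)) ^ 2 = Derive p1 (W 1%nat))
          by (apply pow2_sqrt; left; apply Hp1'; auto).
        destruct i as [|[|[|[|[|i]]]]]; try lia;
        cbv [mulmv Amat Rac1 v5 lam1 sspeed rho1 u1];
        destruct Hs as [-> | ->]; rewrite ?Rmult_0_r, ?Rmult_0_l;
        field; repeat split; try assumption; lra.
      * unfold alpha1, rho2 in *.
        assert (Ha : sqrt (Derive p2 (W 2%nat)) ^ 2 = Derive p2 (W 2%nat))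
          by (apply pow2_sqrt; left; apply Hp2'; auto).
        destruct i as [|[|[|[|[|i]]]]]; try lia;
        cbv [mulmv Amat Rac2 v5 lam2 sspeed rho2 u2];
        destruct Hs as [-> | ->]; rewrite ?Rmult_0_r, ?Rmult_0_l; field; repeat split; try assumption; lra.
    + apply contactEV; auto.
    + intros s Hs. assert (Hss : s * s = 1) by (destruct Hs; subst; ring).
      split.
      * pose proof (gnl1 p1 s W 1 Hp1 Hp1' Hr1 (or_introl eq_refl) Hss) as G.
        change (1+2)%nat with 3%nat in G.
        change (lam1 p1 s) with (fun V : vec => V 3%nat + s * sspeed p1 (V 1%nat)).
        unfold rho1 in *. rewrite <- G. cbv [gradDot Rac1 v5 rho1]. ring.
      * pose proof (gnl1 p2 s W 2 Hp2 Hp2' Hr2 (or_intror eq_refl) Hss) as G.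
        change (2+2)%nat with 4%nat in G.
        change (lam2 p2 s) with (fun V : vec => V 4%nat + s * sspeed p2 (V 2%nat)).
        unfold rho2 in *. rewrite <- G. cbv [gradDot Rac2 v5 rho2]. ring.
    + apply lindeg; auto.
Qed.
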